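(* Let $N\ge 1$, let $\lambda_1,\dots,\lambda_N>0$, let $\mathbf{D}=\mathrm{diag}(\lambda_1,\dots,\lambda_N)$, and let $\mathbf{C}$ be an $N\times N$ symmetric positive definite matrix with all diagonal entries equal to $1$. Then the eigenvalues $\hat\lambda_1,\dots,\hat\lambda_N$ of $\mathbf{A}=\mathbf{D}\mathbf{C}$ are real and positive, and the vector $\hat{\boldsymbol\lambda}=(\hat\lambda_1,\dots,\hat\lambda_N)$ majorizes $\boldsymbol\lambda=(\lambda_1,\dots,\lambda_N)$, i.e. $\hat{\boldsymbol\lambda}\succ\boldsymbol\lambda$. *)

(* Defs.v *)
(* Matrices over an arbitrary real closed field R
   (e.g. the real algebraic numbers; the statement is first-order). *)
From HB Require Import structures.
From mathcomp Require Import all_boot all_order all_algebra.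
Set Implicit Arguments. Unset Strict Implicit. Unset Printing Implicit Defensive.
Import Order.TTheory GRing.Theory Num.Theory.
Local Open Scope ring_scope.

Definition sym_posdef (R : realFieldType) (n : nat) (C : 'M[R]_n) : Prop :=
  C^T = C /\ forall v : 'rV[R]_n, v != 0 -> 0 < (v *m C *m v^T) ord0 ord0.

Definition sort_decr (R : realFieldType) (s : seq R) : seq R := sort (>=%R) s.

Definition majorizes (R : realFieldType) (x y : seq R) : Prop :=
  size x = size y /\
  (forall k : nat, (k <= size x)%N ->
     \sum_(i < k) (sort_decr y)`_i <= \sum_(i < k) (sort_decr x)`_i) /\
  \sum_(i <- x) i = \sum_(i <- y) i.

(* Main.v *)
Require Import Defs.
From HB Require Import structures.
From mathcomp Require Import all_boot all_order all_algebra all_fingroup.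
From mathcomp Require Import complex.
Import Order.TTheory GRing.Theory Num.Theory.
Local Open Scope ring_scope.
Set Implicit Arguments. Unset Strict Implicit.

Lemma maj_core (R : realFieldType) n (Q : 'I_n -> 'I_n -> R) (y : 'I_n -> R) (k : nat) :
  (forall i j, 0 <= Q i j) -> (forall i, \sum_j Q i j = 1) -> (forall j, \sum_i Q i j = 1) ->
  (forall i j : 'I_n, (i <= j)%N -> y j <= y i) -> (k <= n)%N ->
  \sum_(i < n | (i < k)%N) \sum_j Q i j * y j <= \sum_(j < n | (j < k)%N) y j.
Proof.
move=> Q0 Qr Qc ymon kn.
case: k kn => [|k] kn.
  by rewrite !big_pred0.
pose t := y (Ordinal kn).
pose w j := \sum_(i < n | (i < k.+1)%N) Q i j.
have -> : \sum_(i < n | (i < k.+1)%N) \sum_j Q i j * y j = \sum_j w j * y j.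
  rewrite exchange_big /=; apply: eq_bigr => j _; by rewrite /w mulr_suml.
have -> : \sum_(j < n | (j < k.+1)%N) y j = \sum_(j < n) ((j < k.+1)%N%:R * y j).
  by rewrite big_mkcond /=; apply: eq_bigr => j _; case: ifP; rewrite ?mul1r ?mul0r.
have cnt : \sum_(j < n) ((j < k.+1)%N%:R : R) = k.+1%:R.
  transitivity (\sum_(j < n | (j < k.+1)%N) (1:R)).
    by rewrite [RHS]big_mkcond /=; apply: eq_bigr => j _; case: ifP.
  by rewrite (big_ord_narrow kn) sumr_const card_ord.
have wsum : \sum_j w j = k.+1%:R.
  rewrite /w exchange_big /= (eq_bigr (fun _ => (1:R))) => [|i _]; last exact: Qr.
  by rewrite (big_ord_narrow kn) sumr_const card_ord.
have w0 j : 0 <= w j by apply: sumr_ge0 => i _.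
have w1 j : w j <= 1.
  rewrite -(Qc j) /w [X in _ <= X](bigID (fun i : 'I_n => (i < k.+1)%N)) /= lerDl.
  by apply: sumr_ge0 => i _.
rewrite -subr_ge0 -sumrB.
have : \sum_(j < n) (((j < k.+1)%N%:R - w j) * t) <= \sum_(j < n) ((j < k.+1)%N%:R * y j - w j * y j).
  apply: ler_sum => j _; rewrite -mulrBl.
  case: (ltnP j k.+1) => hj.
    apply: ler_wpM2l; first by rewrite subr_ge0.
    by apply: ymon; rewrite /=.
  rewrite sub0r !mulNr lerN2; apply: ler_wpM2l => //.
  by apply: ymon => /=; apply: ltnW.
apply: le_trans.
by rewrite -mulr_suml sumrB cnt wsum subrr mul0r.
Qed.

Lemma sort_perm (R : realFieldType) n (a : 'I_n -> R) :
  exists p : 'S_n, (forall i : 'I_n, (sort_decr [seq a i | i <- enum 'I_n])`_i = a (p i)) /\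
     (forall i j : 'I_n, (i <= j)%N -> a (p j) <= a (p i)).
Proof.
have pe : perm_eq (sort_decr [seq a i | i <- enum 'I_n]) [tuple a i | i < n].
  by rewrite /sort_decr perm_sort /=.
case/tuple_permP: pe => p hp.
have hnth : forall i : 'I_n, (sort_decr [seq a i | i <- enum 'I_n])`_i = a (p i).
  move=> i; rewrite hp /= (nth_map i) ?size_enum_ord // nth_ord_enum tnth_mktuple //.
exists p; split => // i j hij.
have so : sorted >=%R (sort_decr [seq a i | i <- enum 'I_n]).
  apply: sort_sorted => x y; exact: le_total.
have tr : transitive (>=%R : rel R) by move=> x y z /= h1 h2; exact: le_trans h2 h1.
have rf : reflexive (>=%R : rel R) by move=> x /=.
have := sorted_leq_nth tr rf 0 so; rewrite -!hnth; apply => //.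
- by rewrite inE hp size_map size_enum_ord.
- by rewrite inE hp size_map size_enum_ord.
Qed.

Lemma maj_ds (R : realFieldType) n (a b : 'I_n -> R) (Q : 'I_n -> 'I_n -> R) :
  (forall i j, 0 <= Q i j) -> (forall i, \sum_j Q i j = 1) -> (forall j, \sum_i Q i j = 1) ->
  (forall i, a i = \sum_j Q i j * b j) ->
  majorizes [seq b i | i <- enum 'I_n] [seq a i | i <- enum 'I_n].
Proof.
move=> Q0 Qr Qc hab.
split; first by rewrite !size_map.
split; last first.
  rewrite !big_map -!enumT !big_enum_cond /=.
  under [RHS]eq_bigr => i _ do rewrite hab.
  rewrite exchange_big /=; apply: eq_bigr => j _.
  by rewrite -mulr_suml Qc mul1r.
rewrite size_map size_enum_ord => k kn.
have [p [hp _]] := sort_perm a.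
have [q [hq qmon]] := sort_perm b.
have conv (f : 'I_n -> R) (s : seq R) : (forall i : 'I_n, s`_i = f i) ->
    \sum_(i < k) s`_i = \sum_(i < n | (i < k)%N) f i.
  move=> hs; rewrite (big_ord_narrow kn); apply: eq_bigr => i _.
  by rewrite -hs.
rewrite (conv _ _ hp) (conv _ _ hq).
have := @maj_core R n (fun i j => Q (p i) (q j)) (fun j => b (q j)) k.
have e : \sum_(i < n | (i < k)%N) a (p i) =
   \sum_(i < n | (i < k)%N) \sum_j Q (p i) (q j) * b (q j).
  apply: eq_bigr => i _; rewrite hab.
  by rewrite (reindex_inj (@perm_inj _ q)).
rewrite e; apply => //.
- move=> i; rewrite -(Qr (p i)).
  by rewrite [RHS](reindex_inj (@perm_inj _ q)).
- move=> j; rewrite -(Qc (q j)).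
  by rewrite [RHS](reindex_inj (@perm_inj _ p)).
Qed.
Lemma char_poly_similar (F : fieldType) n (P A : 'M[F]_n) : P \in unitmx ->
  char_poly (invmx P *m A *m P) = char_poly A.
Proof.
move=> Pu; rewrite /char_poly /char_poly_mx.
pose Pp := map_mx (@polyC F) P; pose Ip := map_mx (@polyC F) (invmx P).
have IP : Ip *m Pp = 1%:M by rewrite -map_mxM mulVmx // map_mx1.
have -> : 'X%:M - map_mx (@polyC F) (invmx P *m A *m P) =
          Ip *m ('X%:M - map_mx (@polyC F) A) *m Pp.
  rewrite mulmxBr mulmxBl !map_mxM -/Ip -/Pp; congr (_ - _).
  by rewrite -mulmxA -scalar_mxC mulmxA IP mul1mx.
rewrite !det_mulmx mulrC mulrA -det_mulmx.
by rewrite -[Pp *m Ip]map_mxM mulmxV // map_mx1 det1 mul1r.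
Qed.

Lemma sym_spectral (R : rcfType) n (S : 'M[R]_n) : S^T = S ->
  exists (mu : 'rV[R]_n) (Q : 'I_n -> 'I_n -> R),
    char_poly S = \prod_(i < n) ('X - (mu 0 i)%:P) /\
    (forall i j, 0 <= Q i j) /\ (forall i, \sum_j Q i j = 1) /\
    (forall j, \sum_i Q i j = 1) /\
    (forall i, S i i = \sum_j Q i j * mu 0 j).
Proof.
move=> Ssym.
pose Sc : 'M[R[i]]_n := map_mx (real_complex R) S.
have Sherm : Sc \is hermsymmx.
  apply: realsym_hermsym.
    rewrite is_hermitianmxE expr0 scale1r; apply/eqP/matrixP => i j.
    by rewrite !mxE -[in LHS]Ssym mxE.
  apply/mxOverP => i j; rewrite mxE; apply/complex_realP; by eexists.
have Snorm := hermitian_normalmx Sherm.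
have Sdec := orthomx_spectralP Snorm.
set P := spectralmx Sc in Sdec; set d := spectral_diag Sc in Sdec.
have Pu : P \in unitmx := spectral_unit Sc.
have Pinv : invmx P = (P ^t* )%sesqui := invmx_unitary (spectral_unitarymx Sc).
have dreal : forall j, d 0 j \is Num.real.
  by move=> j; have /mxOverP := hermitian_spectral_diag_real Sherm; apply.
pose mu : 'rV[R]_n := \row_j @complex.Re R (d 0 j).
have mud j : (real_complex R) (mu 0 j) = d 0 j by rewrite mxE; exact: RRe_real.
have Pl : (P ^t* )%sesqui *m P = 1%:M by rewrite -Pinv mulVmx.
have Pr : P *m (P ^t* )%sesqui = 1%:M by rewrite -Pinv mulmxV.
pose Q (i j : 'I_n) := @complex.Re R ((P j i)^* * P j i).
have hQ i j : (real_complex R) (Q i j) = (P j i)^* * P j i.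
  apply: RRe_real; apply: ger0_real; rewrite mulrC; exact: mul_conjC_ge0.
exists mu, Q; split.
  apply: (@map_poly_inj _ _ (real_complex R)).
  rewrite map_char_poly -/Sc Sdec char_poly_similar // char_poly_trig ?diag_mx_is_trig //.
  rewrite rmorph_prod; apply: eq_bigr => i _.
  by rewrite /= map_polyXsubC mxE eqxx mulr1n -mud.
split.
  by move=> i j; rewrite -ler0c -[(_%:C)%C]/((real_complex R) _) hQ mulrC mul_conjC_ge0.
split.
  move=> i; apply: complexI; change ((real_complex R) (\sum_j Q i j) = (real_complex R) 1).
  rewrite rmorph_sum rmorph1.
  transitivity (\sum_j (P j i)^* * P j i); first by apply: eq_bigr => j _; exact: hQ.
  have := congr1 (fun M : 'M[R[i]]_n => M i i) Pl; rewrite /= !mxE eqxx mulr1n => <-.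
  by apply: eq_bigr => j _; rewrite !mxE.
split.
  move=> j; apply: complexI; change ((real_complex R) (\sum_i Q i j) = (real_complex R) 1).
  rewrite rmorph_sum rmorph1.
  transitivity (\sum_i (P j i)^* * P j i); first by apply: eq_bigr => i _; exact: hQ.
  have := congr1 (fun M : 'M[R[i]]_n => M j j) Pr; rewrite /= !mxE eqxx mulr1n => <-.
  by apply: eq_bigr => i _; rewrite !mxE mulrC.
move=> i; apply: complexI; change ((real_complex R) (S i i) = (real_complex R) (\sum_j Q i j * mu 0 j)).
rewrite rmorph_sum.
have := congr1 (fun M : 'M[R[i]]_n => M i i) Sdec; rewrite mxE => ->.
rewrite Pinv mul_mx_diag mxE; apply: eq_bigr => j _.
rewrite rmorphM.
rewrite -[X in _ = X * _]/((Q i j)%:C)%C -[X in _ = _ * X]/((mu 0 j)%:C)%C hQ mud !mxE.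
by rewrite mulrAC.
Qed.

Unset Implicit Arguments. Set Strict Implicit.

Theorem mainTheorem1 (R : rcfType) (N : nat) (hN : (1 <= N)%N)
  (lam : 'rV[R]_N) (hlam : forall i, 0 < lam ord0 i)
  (C : 'M[R]_N) (hC : sym_posdef C) (hdiag : forall i, C i i = 1) :
  exists mu : 'rV[R]_N,
    char_poly (diag_mx lam *m C) = \prod_(i < N) ('X - (mu ord0 i)%:P) /\
    (forall i, 0 < mu ord0 i) /\
    majorizes [seq mu ord0 i | i <- enum 'I_N] [seq lam ord0 i | i <- enum 'I_N].
Proof.
case: hC => Csym Cpos.
pose s : 'rV[R]_N := \row_i Num.sqrt (lam 0 i).
pose Dh := diag_mx s.
have s0 i : 0 < s 0 i by rewrite mxE sqrtr_gt0.
have ss i : s 0 i * s 0 i = lam 0 i by rewrite mxE -expr2 sqr_sqrtr // ltW.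
pose S := Dh *m C *m Dh.
have Sij i j : S i j = s 0 i * C i j * s 0 j by rewrite /S /Dh mul_mx_diag mxE mul_diag_mx mxE.
have Ssym : S^T = S.
  apply/matrixP => i j; rewrite mxE !Sij.
  have := congr1 (fun M : 'M[R]_N => M i j) Csym; rewrite mxE => ->.
  by rewrite mulrC [s 0 j * _]mulrC mulrA.
have Dhu : Dh \in unitmx.
  rewrite unitmxE det_diag unitfE; apply/prodf_neq0 => i _; exact: lt0r_neq0.
have DD : Dh *m Dh = diag_mx lam.
  by rewrite mulmx_diag; congr diag_mx; apply/rowP => i; rewrite mxE ss.
have cpS : char_poly (diag_mx lam *m C) = char_poly S.
  rewrite -(char_poly_similar (P := invmx Dh) S) ?unitmx_inv // invmxK.
  congr char_poly.
  by rewrite /S !mulmxA mulmxK // DD.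
have [mu [Q [cp [Q0 [Qr [Qc hS]]]]]] := sym_spectral Ssym.
exists mu; split; first by rewrite cpS cp.
split.
  move=> i.
  have : root (char_poly S) (mu 0 i).
    by rewrite cp /root horner_prod (bigD1 i) //= hornerXsubC subrr mul0r.
  rewrite -eigenvalue_root_char => /eigenvalueP [v vS vn0].
  have [j vj] : exists j, v 0 j != 0.
    case: (pickP (fun j => v 0 j != 0)) => [j hj|hn]; first by exists j.
    case/eqP: vn0; apply/rowP => j; rewrite mxE; apply/eqP.
    by have := hn j => /negbFE.
  have wn0 : v *m Dh != 0.
    apply: contraNneq vn0 => h.
    by rewrite -[v](mulmxK Dhu) h mul0mx.
  have := Cpos _ wn0.
  have -> : v *m Dh *m C *m (v *m Dh)^T = v *m S *m v^T.
    by rewrite trmx_mul tr_diag_mx /S !mulmxA.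
  rewrite vS -scalemxAl mxE.
  have vv : 0 < (v *m v^T) 0 0.
    rewrite mxE (bigD1 j) //= mxE.
    apply: (@lt_le_trans _ _ (v 0 j * v 0 j)).
      by rewrite -expr2 exprn_even_gt0.
    rewrite lerDl; apply: sumr_ge0 => k _; rewrite mxE -expr2; exact: sqr_ge0.
  by rewrite pmulr_lgt0.
apply: (@maj_ds R N (fun i => lam 0 i) (fun i => mu 0 i) Q) => // i.
by rewrite -hS Sij hdiag mulr1 ss.
Qed.
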